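(* Let $X$ be a non-empty finite set and $\mathcal{P}$ a partition of $X$ with distinct block sizes $l_1<\cdots<l_r$. Then $\Sigma(X,\mathcal{P})$ is generated as a semigroup by $S(X,\mathcal{P})\cup\mathcal{B}\cup\mathcal{C}$.
   Context: $T(X,\mathcal{P})$ is the semigroup (under composition) of maps $f:X\to X$ mapping each block of $\mathcal{P}$ into some block; $S(X,\mathcal{P})$ is its group of units; $\Sigma(X,\mathcal{P})$ is the set of $f\in T(X,\mathcal{P})$ whose image intersects every block. For $i\le r-1$, $\mathcal{B}_i$ is the set of $f\in\Sigma(X,\mathcal{P})$ for which there are blocks $P_j,P_{j'},P_k,P_{k'}$ (possibly $j=j'$ or $k=k'$) with $|P_j|=|P_{j'}|=l_i$, $|P_k|=|P_{k'}|=l_{i+1}$, such that $f$ maps $P_j$ injectively into $P_k$, maps $P_{k'}$ onto $P_{j'}$, and maps every other block bijectively onto a block of the same size; $\mathcal{B}=\bigcup_{i=1}^{r-1}\mathcal{B}_i$. For $i\le r$, $\mathcal{C}_i$ is the set of $f\in\Sigma(X,\mathcal{P})$ mapping each block into a block of the same size, such that one block of size $l_i$ has image of size $l_i-1$ and all other blocks are mapped injectively; $\mathcal{C}=\bigcup_{i=1}^r\mathcal{C}_i$. *)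

(* Defs.v *)
From mathcomp Require Import all_boot.
Set Implicit Arguments. Unset Strict Implicit. Unset Printing Implicit Defensive.

Section Defs.
Variable X : finType.
Implicit Types (P : {set {set X}}) (f g : {ffun X -> X}).

Definition compf f g : {ffun X -> X} := [ffun x => f (g x)].
Definition idf : {ffun X -> X} := [ffun x => x].

Definition inT P f : Prop :=
  forall B : {set X}, B \in P -> exists2 C : {set X}, C \in P & f @: B \subset C.

Definition inS P f : Prop :=
  inT P f /\ exists g, [/\ inT P g, compf g f = idf & compf f g = idf].

Definition inSigma P f : Prop :=
  inT P f /\ forall B : {set X}, B \in P -> exists x, f x \in B.

(* the distinct block sizes l_1 < ... < l_r, as a 0-indexed increasing list *)
Definition block_sizes P : seq nat := sort leq (undup [seq #|(B : {set X})| | B in P]).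
Definition nsizes P : nat := size (block_sizes P).
Definition lsize P (i : nat) : nat := nth 0 (block_sizes P) i.  (* l_(i+1) *)

Definition bij_onto_block P f (Q : {set X}) : Prop :=
  exists2 Q' : {set X}, Q' \in P & [/\ #|Q'| = #|Q|, f @: Q = Q' & {in Q &, injective f}].

(* B_i (0-indexed: sizes lsize i and lsize i.+1, i.+1 < r) *)
Definition inBi P (i : nat) f : Prop :=
  inSigma P f /\
  exists Pj Pj' Pk Pk' : {set X},
    [/\ [/\ Pj \in P, Pj' \in P, Pk \in P & Pk' \in P],
        [/\ #|Pj| = lsize P i, #|Pj'| = lsize P i,
            #|Pk| = lsize P i.+1 & #|Pk'| = lsize P i.+1],
        {in Pj &, injective f} /\ f @: Pj \subset Pk,
        f @: Pk' = Pj' &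
        forall Q : {set X}, Q \in P -> Q != Pj -> Q != Pk' -> bij_onto_block P f Q].

Definition inB P f : Prop := exists2 i, i.+1 < nsizes P & inBi P i f.

(* C_i (0-indexed: size lsize i, i < r) *)
Definition inCi P (i : nat) f : Prop :=
  inSigma P f /\
  (forall Q : {set X}, Q \in P -> exists2 Q' : {set X}, Q' \in P & #|Q'| = #|Q| /\ f @: Q \subset Q') /\
  exists2 Q : {set X}, Q \in P &
    [/\ #|Q| = lsize P i, #|f @: Q| = (lsize P i).-1 &
        forall Q' : {set X}, Q' \in P -> Q' != Q -> {in Q' &, injective f}].

Definition inC P f : Prop := exists2 i, i < nsizes P & inCi P i f.

Definition gens P f : Prop := inS P f \/ inB P f \/ inC P f.

Definition in_generated_semigroup (A : {ffun X -> X} -> Prop) f : Prop :=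
  exists s : seq {ffun X -> X},
    [/\ s != [::], (forall g, g \in s -> A g) & f = foldr compf idf s].

End Defs.

(* Main.v *)
Require Import Defs.
From mathcomp Require Import all_boot zify.
Set Implicit Arguments. Unset Strict Implicit. Unset Printing Implicit Defensive.

Lemma pb_mem (X : finType) (P : {set {set X}}) (hP : partition P [set: X]) x :
  pblock P x \in P.
Proof. case/and3P: hP => /eqP hc _ _; apply: pblock_mem; by rewrite hc inE. Qed.

Lemma pb_in (X : finType) (P : {set {set X}}) (hP : partition P [set: X]) x :
  x \in pblock P x.
Proof. case/and3P: hP => /eqP hc _ _; by rewrite mem_pblock hc inE. Qed.

Lemma pb_eq (X : finType) (P : {set {set X}}) (hP : partition P [set: X]) C x :
  C \in P -> x \in C -> pblock P x = C.
Proof. case/and3P: hP => _ ht _; exact: def_pblock. Qed.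

Lemma pb_inE (X : finType) (P : {set {set X}}) (hP : partition P [set: X]) C x :
  C \in P -> (x \in C) = (pblock P x == C).
Proof.
move=> hC; apply/idP/eqP => [|<-]; first exact: pb_eq.
exact: pb_in.
Qed.

Lemma pb_ne (X : finType) (P : {set {set X}}) (hP : partition P [set: X]) C :
  C \in P -> exists x, x \in C.
Proof.
case/and3P: hP => _ _ h0 hC; case: (set_0Vmem C) => [e|[x hx]]; last by exists x.
by move: hC; rewrite e => hC; rewrite hC in h0.
Qed.

Lemma inT_pb (X : finType) (P : {set {set X}}) (hP : partition P [set: X]) f :
  inT P f <-> (forall a b, pblock P a = pblock P b -> pblock P (f a) = pblock P (f b)).
Proof.
split.
- move=> hT a b e. have [C hC sub] := hT _ (pb_mem hP a).
  have ha : f a \in C by apply: (subsetP sub); apply: imset_f; exact: pb_in.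
  have hb : f b \in C by apply: (subsetP sub); apply: imset_f; rewrite e; exact: pb_in.
  by rewrite (pb_eq hP hC ha) (pb_eq hP hC hb).
- move=> h B hB. have [x hx] := pb_ne hP hB.
  exists (pblock P (f x)); first exact: pb_mem.
  apply/subsetP => _ /imsetP [z hz ->].
  rewrite (h x z); first exact: pb_in.
  by rewrite (pb_eq hP hB hz) (pb_eq hP hB hx).
Qed.

Lemma meet_pb (X : finType) (P : {set {set X}}) (hP : partition P [set: X]) (f : {ffun X -> X}) :
  (forall B, B \in P -> exists x, f x \in B) <-> (forall y, exists x, pblock P (f x) = pblock P y).
Proof.
split.
- move=> h y; have [x hx] := h _ (pb_mem hP y); exists x; exact: pb_eq (pb_mem hP y) hx.
- move=> h B hB; have [y hy] := pb_ne hP hB; have [x hx] := h y.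
  exists x; rewrite (pb_inE hP _ hB) hx; apply/eqP; exact: pb_eq.
Qed.

Lemma sigma_pb (X : finType) (P : {set {set X}}) (hP : partition P [set: X]) (f : {ffun X -> X}) :
  inSigma P f <-> (forall a b, pblock P a = pblock P b -> pblock P (f a) = pblock P (f b)) /\
                  (forall y, exists x, pblock P (f x) = pblock P y).
Proof.
rewrite /inSigma; split.
- by case=> h1 h2; split; [apply/(inT_pb hP) | apply/(meet_pb hP)].
- by case=> h1 h2; split; [apply/(inT_pb hP) | apply/(meet_pb hP)].
Qed.

Lemma compfE (X : finType) (f g : {ffun X -> X}) x : compf f g x = f (g x).
Proof. by rewrite /compf ffunE. Qed.
Lemma idfE (X : finType) x : @idf X x = x.
Proof. by rewrite /idf ffunE. Qed.

Lemma sigma_comp (X : finType) (P : {set {set X}}) (hP : partition P [set: X]) f g :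
  inSigma P f -> inSigma P g -> inSigma P (compf f g).
Proof.
move=> /(sigma_pb hP) [f1 f2] /(sigma_pb hP) [g1 g2]; apply/(sigma_pb hP); split.
- by move=> a b e; rewrite !compfE; apply: f1; apply: g1.
- move=> y; have [x1 h1] := f2 y; have [x2 h2] := g2 x1.
  by exists x2; rewrite compfE -h1; apply: f1.
Qed.

Lemma sigma_id (X : finType) (P : {set {set X}}) (hP : partition P [set: X]) :
  inSigma P (@idf X).
Proof. apply/(sigma_pb hP); split; first by move=> a b; rewrite !idfE.
by move=> y; exists y; rewrite idfE. Qed.

Lemma S_sigma (X : finType) (P : {set {set X}}) (hP : partition P [set: X]) f :
  inS P f -> inSigma P f.
Proof.
case=> hT [g [_ _ e2]]; split => // B hB; have [y hy] := pb_ne hP hB.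
by exists (g y); rewrite -compfE e2 idfE.
Qed.

Lemma gens_sigma (X : finType) (P : {set {set X}}) (hP : partition P [set: X]) f :
  gens P f -> inSigma P f.
Proof. by case=> [/(S_sigma hP)//|[[i _ [h _]]|[i _ [h _]]]]. Qed.

Lemma fold_sigma (X : finType) (P : {set {set X}}) (hP : partition P [set: X]) s :
  (forall g, g \in s -> gens P g) -> inSigma P (foldr (@compf X) (@idf X) s).
Proof.
elim: s => [|g s IH] h /=; first exact: sigma_id.
apply: sigma_comp => //; first by apply: (gens_sigma hP); apply: h; rewrite inE eqxx.
by apply: IH => g' hg'; apply: h; rewrite inE hg' orbT.
Qed.

Definition sigf (X : finType) (P : {set {set X}}) (f : {ffun X -> X}) (B : {set X}) :=
  odflt set0 [pick C in P | f @: B \subset C].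

Lemma sigfE (X : finType) (P : {set {set X}}) (hP : partition P [set: X]) f B x :
  inSigma P f -> B \in P -> x \in B -> sigf P f B = pblock P (f x).
Proof.
move=> hs hB hx; rewrite /sigf; case: pickP => [C /andP [hC sub]|h] /=.
  by apply/esym/(pb_eq hP hC); apply: (subsetP sub); apply: imset_f.
have [h1 _] := hs; have [C hC sub] := h1 _ hB.
by move: (h C); rewrite hC sub.
Qed.

Lemma sigf_onto (X : finType) (P : {set {set X}}) (hP : partition P [set: X]) f C :
  inSigma P f -> C \in P -> exists2 B, B \in P & sigf P f B = C.
Proof.
move=> hs hC; have [_ h2] := (sigma_pb hP f).1 hs.
have [y hy] := pb_ne hP hC; have [x hx] := h2 y.
exists (pblock P x); first exact: pb_mem.
by rewrite (sigfE hP hs (pb_mem hP x) (pb_in hP x)) hx; apply: pb_eq.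
Qed.

Lemma sigf_inj (X : finType) (P : {set {set X}}) (hP : partition P [set: X]) f :
  inSigma P f -> {in P &, injective (sigf P f)}.
Proof.
move=> hs; apply/imset_injP; rewrite eqn_leq leq_imset_card /=.
apply: subset_leq_card; apply/subsetP => C hC.
by have [B hB <-] := sigf_onto hP hs hC; apply: imset_f.
Qed.

Lemma pb_inj (X : finType) (P : {set {set X}}) (hP : partition P [set: X]) f a b :
  inSigma P f -> pblock P (f a) = pblock P (f b) -> pblock P a = pblock P b.
Proof.
move=> hs e; apply: (sigf_inj hP hs); try exact: pb_mem.
by rewrite (sigfE hP hs (pb_mem hP a) (pb_in hP a)) (sigfE hP hs (pb_mem hP b) (pb_in hP b)).
Qed.

Lemma bs_mem (X : finType) (P : {set {set X}}) u :
  (u \in block_sizes P) <-> exists2 B, B \in P & #|B| = u.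
Proof.
rewrite /block_sizes mem_sort mem_undup; split.
- by case/imageP => B hB ->; exists B.
- by case=> B hB <-; apply/imageP; exists B.
Qed.

Lemma bs_sorted (X : finType) (P : {set {set X}}) : sorted leq (block_sizes P).
Proof. apply: sort_sorted; exact: leq_total. Qed.

Lemma bs_uniq (X : finType) (P : {set {set X}}) : uniq (block_sizes P).
Proof. by rewrite /block_sizes sort_uniq undup_uniq. Qed.

Lemma bs_mono (X : finType) (P : {set {set X}}) i j :
  i <= j -> j < nsizes P -> lsize P i <= lsize P j.
Proof.
move=> hij hj; apply: (sorted_leq_nth leq_trans leqnn 0 (bs_sorted P)) => //.
by rewrite inE (leq_ltn_trans hij hj).
Qed.

Lemma bs_idx (X : finType) (P : {set {set X}}) u :
  u \in block_sizes P -> exists2 i, i < nsizes P & lsize P i = u.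
Proof.
move=> hu; exists (index u (block_sizes P)); first by rewrite /nsizes index_mem.
by rewrite /lsize nth_index.
Qed.

Lemma level (X : finType) (P : {set {set X}}) s u :
  s \in block_sizes P -> u \in block_sizes P -> u < s ->
  exists i, [/\ i.+1 < nsizes P, lsize P i.+1 = s, lsize P i \in block_sizes P,
                lsize P i < s &
                forall v, v \in block_sizes P -> v < s -> v <= lsize P i].
Proof.
move=> hs hu lus.
have [k hk ek] := bs_idx hs.
have below : forall v, v \in block_sizes P -> v < s -> exists2 j, j < k & lsize P j = v.
  move=> v hv lvs; have [j hj ej] := bs_idx hv; exists j => //.
  rewrite ltnNge; apply/negP => hkj.
  by move: (bs_mono hkj hj); rewrite ej ek leqNgt lvs.
have [j hj _] := below u hu lus.
case: k hk ek below hj => [|i] hk ek below hj //.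
exists i; split => //.
- by rewrite /lsize mem_nth // (ltn_trans _ hk).
- rewrite -ek ltn_neqAle bs_mono 1?(leqnSn i) // andbT.
  rewrite /lsize nth_uniq ?bs_uniq //; first by rewrite neq_ltn ltnSn.
  exact: ltn_trans (ltnSn i) hk.
- move=> v hv lvs; have [j' hj' <-] := below v hv lvs.
  by apply: bs_mono => //; apply: ltn_trans hk.
Qed.

Lemma ext_set (X : finType) (A C : {set X}) k :
  A \subset C -> #|A| + k <= #|C| -> exists2 A' : {set X}, A \subset A' & A' \subset C /\ #|A'| = #|A| + k.
Proof.
elim: k A => [|k IH] A sAC hk; first by exists A; rewrite ?addn0.
have : A \proper C by rewrite properEcard sAC (leq_trans _ hk) // addnS ltnS leq_addr.
case/properP => _ [z zC zA].
have s1 : z |: A \subset C by rewrite subUset sub1set zC.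
have s2 : #|z |: A| + k <= #|C| by rewrite cardsU1 zA add1n addSnnS.
have [A' h1 [h2 h3]] := IH (z |: A) s1 s2.
exists A'; last split => //; first exact: subset_trans (subsetUr _ _) h1.
by rewrite h3 cardsU1 zA add1n addSnnS.
Qed.

Lemma bij_sets (X : finType) (A B : {set X}) :
  #|A| = #|B| -> exists h g : X -> X,
    (forall x, x \in A -> h x \in B /\ g (h x) = x) /\
    (forall y, y \in B -> g y \in A /\ h (g y) = y).
Proof.
move=> e.
exists (fun x => nth x (enum B) (index x (enum A))), (fun y => nth y (enum A) (index y (enum B))).
have sA : size (enum A) = size (enum B) by rewrite -!cardE.
split.
- move=> x hx; have hi : index x (enum A) < size (enum B) by rewrite -sA index_mem mem_enum.
  split; first by rewrite -mem_enum mem_nth.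
  by rewrite index_uniq ?enum_uniq // -?sA // nth_index // mem_enum.
- move=> y hy; have hi : index y (enum B) < size (enum A) by rewrite sA index_mem mem_enum.
  split; first by rewrite -mem_enum mem_nth.
  by rewrite index_uniq ?enum_uniq // ?sA // nth_index // mem_enum.
Qed.

Lemma stepS (X : finType) (P : {set {set X}}) (hP : partition P [set: X]) f :
  inSigma P f -> #|f @: [set: X]| = #|X| -> inS P f.
Proof.
move=> hs hc.
have finj : injective f.
  have : {in [set: X] &, injective f} by apply/imset_injP; rewrite hc cardsT.
  by move=> h x y; apply: h; rewrite inE.
split; first exact: hs.1.
exists [ffun y => invF finj y]; split.
- apply/(inT_pb hP) => a b e; apply: (pb_inj hP hs); by rewrite !ffunE !f_invF.
- by apply/ffunP => x; rewrite compfE !ffunE invF_f.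
- by apply/ffunP => x; rewrite compfE !ffunE f_invF.
Qed.

Definition Psi (X : finType) (P : {set {set X}}) (f : {ffun X -> X}) :=
  \sum_x #|pblock P (f x)|.

Lemma Psi_le (X : finType) (P : {set {set X}}) f : Psi P f <= #|X| * #|X|.
Proof.
rewrite /Psi -sum_nat_const; apply: leq_sum => x _; exact: max_card.
Qed.

Lemma stepC (X : finType) (P : {set {set X}}) (hP : partition P [set: X]) f :
  inSigma P f -> #|f @: [set: X]| != #|X| ->
  (forall x, #|pblock P (f x)| <= #|pblock P x|) ->
  exists f' c, [/\ inSigma P f', inC P c, f = compf f' c, Psi P f' = Psi P f &
                   #|f @: [set: X]| < #|f' @: [set: X]|].
Proof.
move=> hs hc hle.
have [zz hzz] : exists zz, zz \notin f @: [set: X].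
  apply/existsP; rewrite -negb_forall; apply/negP => /forallP hall.
  have e : f @: [set: X] = [set: X] by apply/setP => y; rewrite inE hall.
  by move/negP: hc; apply; rewrite e cardsT.
have [_ hm] := (sigma_pb hP f).1 hs.
have [x1 hx1] := hm zz.
set B := pblock P x1; set Cz := pblock P zz in hx1 *.
have [h1 _] := (sigma_pb hP f).1 hs.
have hBf : forall z, z \in B -> pblock P (f z) = Cz.
  move=> z hz; rewrite -hx1; apply: h1; exact: pb_eq (pb_mem hP x1) hz.
have hB : B \in P by apply: pb_mem.
have hzC : zz \in Cz by apply: pb_in.
have ltB : #|f @: B| < #|B|.
  have s1 : f @: B \subset Cz :\ zz.
    apply/subsetP => _ /imsetP [z hz ->]; rewrite !inE.
    apply/andP; split; last by rewrite (pb_inE hP _ (pb_mem hP zz)) hBf.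
    by apply/negP => /eqP e; move: hzz; rewrite -e imset_f // inE.
  move: (subset_leq_card s1) (hle x1); rewrite hx1 (cardsD1 zz Cz) hzC add1n => a b.
  exact: leq_ltn_trans a b.
have [x [y [hx hy hxy hfe]]] : exists x y, [/\ x \in B, y \in B, x != y & f x = f y].
  case: (boolP [exists x in B, exists y in B, (x != y) && (f x == f y)]) =>
    [/exists_inP [x hx /exists_inP [y hy /andP [n /eqP e]]]|hn]; first by exists x, y.
  exfalso; have : {in B &, injective f}.
    move=> a b ha hb e; apply/eqP/negPn/negP => nab; move/negP: hn; apply.
    apply/exists_inP; exists a => //; apply/exists_inP; exists b => //.
    by rewrite nab e eqxx.
  by move/imset_injP/eqP => e; rewrite e ltnn in ltB.
have pxy : pblock P x = pblock P y by rewrite (pb_eq hP hB hx) (pb_eq hP hB hy).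
set c := [ffun w => if w == y then x else w].
set f' := [ffun w => if w == y then zz else f w].
have hpb : forall w, pblock P (f' w) = pblock P (f w).
  move=> w; rewrite ffunE; case: eqP => [->|//]; by rewrite hBf.
have hcb : forall w, pblock P (c w) = pblock P w.
  by move=> w; rewrite ffunE; case: eqP => [->|].
exists f', c; split.
- apply/(sigma_pb hP); split.
  + by move=> a b e; rewrite !hpb; apply: h1.
  + by move=> y'; have [x' hx'] := hm y'; exists x'; rewrite hpb.
- have [i hi ei] : exists2 i, i < nsizes P & lsize P i = #|B|.
    by apply: bs_idx; apply/bs_mem; exists B.
  exists i => //; split; last split.
  + apply/(sigma_pb hP); split; first by move=> a b e; rewrite !hcb.
    by move=> y'; exists y'; rewrite hcb.
  + move=> Q hQ; exists Q => //; split => //; apply/subsetP => _ /imsetP [w hw ->].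
    by rewrite (pb_inE hP _ hQ) hcb (pb_eq hP hQ hw).
  + exists B => //; split => //.
    * have -> : c @: B = B :\ y.
        apply/setP => w; rewrite !inE; apply/imsetP/andP => [[w' hw' ->]|[n hw]].
          rewrite ffunE; case: (eqVneq w' y) => [_|n]; by split.
        by exists w => //; rewrite ffunE (negbTE n).
      by rewrite ei (cardsD1 y B) hy add1n.
    * move=> Q hQ nQ a b ha hb; rewrite !ffunE.
      have nya : forall w, w \in Q -> (w == y) = false.
        move=> w hw; apply/negP => /eqP e; subst w.
        by move/negP: nQ; apply; rewrite -(pb_eq hP hQ hw) -(pb_eq hP hB hy).
      by rewrite (nya a ha) (nya b hb).
- apply/ffunP => w; rewrite compfE !ffunE; case: (eqVneq w y) => [->|n].
    by rewrite (negbTE hxy).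
  by rewrite (negbTE n).
- by rewrite /Psi; apply: eq_bigr => w _; rewrite hpb.
- apply: proper_card; apply/properP; split.
    apply/subsetP => _ /imsetP [w _ ->]; case: (eqVneq w y) => [->|n].
      by rewrite -hfe; apply/imsetP; exists x; rewrite ?inE // ffunE (negbTE hxy).
    by apply/imsetP; exists w; rewrite ?inE // ffunE (negbTE n).
  by exists zz => //; apply/imsetP; exists y; rewrite ?inE // ffunE eqxx.
Qed.

Lemma arith_key a1 a2 d e s t : t < s -> d < e ->
  a1 + (d * s + e * t) = a2 + (d * t + e * s) -> a2 < a1.
Proof. move=> *; nia. Qed.

Lemma swap_sigma (X : finType) (P : {set {set X}}) (hP : partition P [set: X])
   (F G : {ffun X -> X}) (phi : {set X} -> {set X}) :
  inSigma P G -> (forall z, pblock P (F z) = phi (pblock P (G z))) ->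
  (forall C, C \in P -> phi C \in P) -> (forall C, C \in P -> phi (phi C) = C) ->
  inSigma P F.
Proof.
move=> /(sigma_pb hP) [g1 g2] hF hP1 hP2; apply/(sigma_pb hP); split.
- by move=> a b e; rewrite !hF (g1 a b e).
- move=> y; have hC := hP1 _ (pb_mem hP y).
  have [y' hy'] := pb_ne hP hC; have [x hx] := g2 y'.
  exists x; rewrite hF hx (pb_eq hP hC hy') hP2 //; exact: pb_mem.
Qed.

Lemma stepB (X : finType) (P : {set {set X}}) (hP : partition P [set: X]) f :
  inSigma P f -> (exists x, #|pblock P x| < #|pblock P (f x)|) ->
  exists b f', [/\ inSigma P f', inB P b, f = compf b f' & Psi P f < Psi P f'].
Proof.
move=> hs [xu hxu].
have [h1 hm] := (sigma_pb hP f).1 hs.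
pose Pn n := [exists x, (#|pblock P x| < #|pblock P (f x)|) && (#|pblock P (f x)| == n)].
have hex : exists n, Pn n.
  by exists #|pblock P (f xu)|; apply/existsP; exists xu; rewrite hxu eqxx.
case: (ex_minnP hex) => s /existsP [x0 /andP [up0 /eqP es]] smin'.
have smin : forall x, #|pblock P x| < #|pblock P (f x)| -> s <= #|pblock P (f x)|.
  by move=> x hx; apply: smin'; apply/existsP; exists x; rewrite hx eqxx.
set D := pblock P x0 in up0 *; set Pk := pblock P (f x0) in up0 es *.
have hD : D \in P by apply: pb_mem.
have hPk : Pk \in P by apply: pb_mem.
have sbs : s \in block_sizes P by apply/bs_mem; exists Pk.
have dbs : #|D| \in block_sizes P by apply/bs_mem; exists D.
have ud : #|D| < s by rewrite -es.
have [i [hi ei1 tbs lts tmax]] := level sbs dbs ud.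
set t := lsize P i in tbs lts tmax *.
have hDt : #|D| <= t by apply: tmax.
have [y0 [hy0t hy0D]] : exists y0, #|pblock P (f y0)| = t /\ #|D| < #|pblock P y0|.
  case: (boolP [exists y, (#|pblock P (f y)| == t) && (#|D| < #|pblock P y|)]) =>
    [/existsP [y /andP [/eqP a b]]|hn]; first by exists y.
  have hn' : forall y, #|pblock P (f y)| = t -> #|pblock P y| <= #|D|.
    move=> y hy; rewrite leqNgt; apply/negP => hy'; move/negP: hn; apply.
    by apply/existsP; exists y; rewrite hy eqxx hy'.
  set T := [set E in P | #|sigf P f E| == t].
  set L := [set C in P | #|C| == t].
  have TL : T \subset L.
    apply/subsetP => E; rewrite !inE => /andP [hE /eqP hEt]; rewrite hE /=.
    have [z hz] := pb_ne hP hE.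
    rewrite (sigfE hP hs hE hz) in hEt.
    have ez := pb_eq hP hE hz.
    have a1 := hn' z hEt; rewrite ez in a1.
    rewrite eqn_leq (leq_trans a1 hDt) /= leqNgt; apply/negP => lt.
    have := smin z; rewrite ez hEt => /(_ lt); rewrite leqNgt lts //.
  have LT : L \subset sigf P f @: T.
    apply/subsetP => C; rewrite inE => /andP [hC /eqP hCt].
    have [B hB eB] := sigf_onto hP hs hC.
    by apply/imsetP; exists B => //; rewrite inE hB eB hCt eqxx.
  have eTL : T = L.
    apply/eqP; rewrite eqEcard TL /=.
    exact: leq_trans (subset_leq_card LT) (leq_imset_card _ _).
  have [C0 hC0 eC0] := (bs_mem P t).1 tbs.
  have : C0 \in T by rewrite eTL inE hC0 eC0 eqxx.
  rewrite inE hC0 /= => /eqP hsig.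
  have [z hz] := pb_ne hP hC0.
  rewrite (sigfE hP hs hC0 hz) in hsig.
  have := hn' z hsig; rewrite (pb_eq hP hC0 hz) eC0 => htD.
  have eDt : #|D| = t by apply/eqP; rewrite eqn_leq hDt htD.
  have : D \in T by rewrite eTL inE hD eDt eqxx.
  rewrite inE hD /= (sigfE hP hs hD (pb_in hP x0)) => /eqP.
  by rewrite -/Pk es => ets; move: lts; rewrite ets ltnn.
set E := pblock P y0 in hy0D *; set Pj := pblock P (f y0) in hy0t *.
have hE : E \in P by apply: pb_mem.
have hPj : Pj \in P by apply: pb_mem.
have nPjk : Pj != Pk by apply/negP => /eqP e; move: lts; rewrite -hy0t e es ltnn.
have disj : forall z, z \in Pj -> (z \in Pk) = false.
  move=> z hz; apply/negP => hz'; move/negP: nPjk; apply; apply/eqP.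
  by rewrite -(pb_eq hP hPj hz) -(pb_eq hP hPk hz').
have disj2 : forall z, z \in Pk -> (z \in Pj) = false.
  by move=> z hz; apply/negP => hz'; rewrite disj in hz.
have inD : forall x, (f x \in Pk) = (x \in D).
  move=> x; rewrite (pb_inE hP _ hPk) (pb_inE hP _ hD); apply/eqP/eqP.
  - by move/(pb_inj hP hs).
  - by move/h1.
have inE' : forall x, (f x \in Pj) = (x \in E).
  move=> x; rewrite (pb_inE hP _ hPj) (pb_inE hP _ hE); apply/eqP/eqP.
  - by move/(pb_inj hP hs).
  - by move/h1.
set A := f @: D.
have AK : A \subset Pk by apply/subsetP => _ /imsetP [z hz ->]; rewrite inD.
have At : #|A| <= t by apply: leq_trans (leq_imset_card _ _) hDt.
have [A' AA' [A'K cA']] : exists2 A' : {set X}, A \subset A' & A' \subset Pk /\ #|A'| = #|A| + (t - #|A|).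
  by apply: ext_set => //; rewrite subnKC // es ltnW.
rewrite subnKC // in cA'.
have [h [g [hh hg]]] := bij_sets (esym (etrans cA' (esym hy0t))).
have fA' : forall x, f x \in Pk -> f x \in A'.
  by move=> x; rewrite inD => hx; apply: (subsetP AA'); apply: imset_f.
have w0P : f y0 \in Pj by apply: pb_in.
set b := [ffun z => if z \in Pj then h z else if z \in Pk then (if z \in A' then g z else f y0) else z].
set f' := [ffun x => if f x \in Pj then h (f x) else if f x \in Pk then g (f x) else f x].
pose sw C := if C == Pj then Pk else if C == Pk then Pj else C.
have swP : forall C, C \in P -> sw C \in P.
  by move=> C hC; rewrite /sw; case: eqP => // _; case: eqP.
have swK : forall C, sw (sw C) = C.
  move=> C; rewrite /sw; case: (eqVneq C Pj) => [->|nj]; first by rewrite eq_sym (negbTE nPjk) eqxx.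
  case: (eqVneq C Pk) => [->|nk]; first by rewrite eqxx.
  by rewrite (negbTE nj) (negbTE nk).
have hK : forall z, z \in Pk -> pblock P z = Pk by move=> z; apply: pb_eq.
have hJ : forall z, z \in Pj -> pblock P z = Pj by move=> z; apply: pb_eq.
have swJ : sw Pj = Pk by rewrite /sw eqxx.
have swK' : sw Pk = Pj by rewrite /sw eq_sym (negbTE nPjk) eqxx.
have swO : forall z, z \notin Pj -> z \notin Pk -> sw (pblock P z) = pblock P z.
  move=> z nj nk; rewrite /sw.
  have -> : (pblock P z == Pj) = false by apply/negbTE; rewrite -(pb_inE hP _ hPj).
  by have -> : (pblock P z == Pk) = false by apply/negbTE; rewrite -(pb_inE hP _ hPk).
have hpf : forall x, pblock P (f' x) = sw (pblock P (f x)).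
  move=> x; rewrite ffunE; case: (boolP (f x \in Pj)) => hj.
    have [hx _] := hh _ hj; by rewrite (hJ _ hj) swJ (hK _ (subsetP A'K _ hx)).
  case: (boolP (f x \in Pk)) => hk; last by rewrite swO.
  have [hx _] := hg _ (fA' _ hk); by rewrite (hK _ hk) swK' (hJ _ hx).
have hpb : forall z, pblock P (b z) = sw (pblock P (@idf X z)).
  move=> z; rewrite idfE ffunE; case: (boolP (z \in Pj)) => hj.
    have [hx _] := hh _ hj; by rewrite (hJ _ hj) swJ (hK _ (subsetP A'K _ hx)).
  case: (boolP (z \in Pk)) => hk; last by rewrite swO.
  rewrite (hK _ hk) swK'; case: ifP => hz; last by rewrite (hJ _ w0P).
  by have [hx _] := hg _ hz; rewrite (hJ _ hx).
exists b, f'; split.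
- exact: swap_sigma hs hpf swP (fun C _ => swK C).
- exists i => //; split; first exact: swap_sigma (sigma_id hP) hpb swP (fun C _ => swK C).
  exists Pj, Pj, Pk, Pk; split => //.
  + by split => //; rewrite -?es ?ei1.
  + split.
      move=> a c ha hc; rewrite !ffunE ha hc => e.
      by rewrite -(hh a ha).2 -(hh c hc).2 e.
    apply/subsetP => _ /imsetP [z hz ->]; rewrite ffunE hz.
    exact: (subsetP A'K) (hh z hz).1.
  + apply/setP => w; apply/imsetP/idP => [[z hz ->]|hw].
      rewrite ffunE (disj2 _ hz) hz; case: ifP => hA; [exact: (hg _ hA).1 | exact: w0P].
    have [hA hgh] := hh _ hw; have hk := subsetP A'K _ hA.
    by exists (h w) => //; rewrite ffunE (disj2 _ hk) hk hA hgh.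
  + move=> Q hQ nQj nQk.
    have bq : forall z, z \in Q -> b z = z.
      move=> z hz; rewrite ffunE.
      have -> : (z \in Pj) = false.
        apply/negP => hj; move/negP: nQj; apply; apply/eqP.
        by rewrite -(pb_eq hP hQ hz) (pb_eq hP hPj hj).
      have -> : (z \in Pk) = false.
        apply/negP => hj; move/negP: nQk; apply; apply/eqP.
        by rewrite -(pb_eq hP hQ hz) (pb_eq hP hPk hj).
      by [].
    exists Q => //; split => //.
    * by rewrite (eq_in_imset bq) imset_id.
    * by move=> a c ha hc; rewrite (bq a ha) (bq c hc).
- apply/ffunP => x; rewrite compfE ffunE [f' x]ffunE.
  case: (boolP (f x \in Pj)) => hj.
    have [hA hgh] := hh _ hj; have hk := subsetP A'K _ hA.
    by rewrite (disj2 _ hk) hk hA hgh.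
  case: (boolP (f x \in Pk)) => hk; last by rewrite (negbTE hj) (negbTE hk).
  have [hA hgh] := hg _ (fA' _ hk).
  by rewrite hA hgh.
- have key : \sum_x (#|pblock P (f' x)| + ((f x \in Pk) * s + (f x \in Pj) * t)) =
             \sum_x (#|pblock P (f x)| + ((f x \in Pk) * t + (f x \in Pj) * s)).
    apply: eq_bigr => x _; rewrite hpf.
    case: (boolP (f x \in Pj)) => hj.
      rewrite (disj _ hj) (hJ _ hj) swJ -es hy0t /=; by rewrite ?mul0n ?mul1n ?addn0 ?add0n addnC.
    case: (boolP (f x \in Pk)) => hk.
      rewrite (hK _ hk) swK' -es hy0t /=; by rewrite ?mul0n ?mul1n ?addn0 ?add0n addnC.
    by rewrite swO.
  have sm : forall (C : {set X}) n, (forall x, (f x \in C) = (x \in (pblock P (if C == Pk then x0 else y0)))) ->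
      \sum_x (f x \in C) * n = #|pblock P (if C == Pk then x0 else y0)| * n.
    move=> C n hC; rewrite -sum_nat_const [RHS]big_mkcond /=; apply: eq_bigr => x _.
    by rewrite hC; case: (x \in _); rewrite ?mul1n ?mul0n.
  have sK := sm Pk; rewrite eqxx in sK.
  have sJ := sm Pj; rewrite (negbTE nPjk) in sJ.
  rewrite !big_split /= (sK s inD) (sK t inD) (sJ t inE') (sJ s inE') in key.
  rewrite /Psi; move: key hy0D lts; rewrite /D /E; move=> k h1' h2'; exact: arith_key h2' h1' k.
Qed.

Lemma foldr_rcons (X : finType) (s : seq {ffun X -> X}) c :
  foldr (@compf X) (@idf X) (rcons s c) = compf (foldr (@compf X) (@idf X) s) c.
Proof.
elim: s => [|g s IH] /=; first by apply/ffunP => x; rewrite !compfE !idfE.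
by rewrite IH; apply/ffunP => x; rewrite !compfE.
Qed.

Lemma mu_lt1 M N p p' i i' : p < p' -> p' <= M ->
  (M - p') * N.+1 + (N - i') < (M - p) * N.+1 + (N - i).
Proof. move=> *; nia. Qed.

Lemma mu_lt2 M N p i i' : i < i' -> i' <= N ->
  (M - p) * N.+1 + (N - i') < (M - p) * N.+1 + (N - i).
Proof. move=> *; lia. Qed.

Definition mu (X : finType) (P : {set {set X}}) (f : {ffun X -> X}) :=
  (#|X| * #|X| - Psi P f) * #|X|.+1 + (#|X| - #|f @: [set: X]|).

Lemma main_ind (X : finType) (P : {set {set X}}) (hP : partition P [set: X]) n :
  forall f, mu P f < n -> inSigma P f -> in_generated_semigroup (gens P) f.
Proof.
elim: n => [//|n IH] f hmu hs.
case: (eqVneq #|f @: [set: X]| #|X|) => hc.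
  exists [:: f]; split => //.
  - by move=> g; rewrite inE => /eqP ->; left; apply: stepS.
  - by apply/ffunP => x; rewrite compfE idfE.
case: (boolP [exists x, #|pblock P x| < #|pblock P (f x)|]) => hup.
  have [x hx] : exists x, #|pblock P x| < #|pblock P (f x)| by apply/existsP.
  have [b [f' [hs' hb ef hPsi]]] := stepB hP hs (ex_intro _ x hx).
  have hmu' : mu P f' < n.
    rewrite -ltnS; apply: leq_trans hmu; apply: mu_lt1 hPsi (Psi_le _ _).
  have [s [_ hg e']] := IH f' hmu' hs'.
  exists (b :: s); split => //.
  - by move=> g; rewrite inE => /orP [/eqP ->|/hg //]; right; left.
  - by rewrite ef e'.
have hle : forall x, #|pblock P (f x)| <= #|pblock P x|.
  move=> x; rewrite leqNgt; apply/negP => h; move/negP: hup; apply.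
  by apply/existsP; exists x.
have [f' [c [hs' hcC ef hPsi hlt]]] := stepC hP hs hc hle.
have hmu' : mu P f' < n.
  rewrite -ltnS; apply: leq_trans hmu; rewrite /mu hPsi; apply: mu_lt2 hlt _.
  exact: max_card.
have [s [ns hg e']] := IH f' hmu' hs'.
exists (rcons s c); split.
- by case: (s) => //.
- by move=> g; rewrite mem_rcons inE => /orP [/eqP ->|/hg //]; right; right.
- by rewrite foldr_rcons -e'.
Qed.

Unset Implicit Arguments.

Theorem corollary4p5 (X : finType) (P : {set {set X}}) :
  0 < #|X| -> partition P [set: X] ->
  forall f : {ffun X -> X}, inSigma P f <-> in_generated_semigroup (gens P) f.
Proof.
move=> _ hP f; split.
- by move=> hs; apply: (main_ind hP (n := (mu P f).+1)).
- by case=> s [_ hg ->]; apply: fold_sigma.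
Qed.
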